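(* Let $L/L^G$ be a Galois extension of number fields with Galois group $G$, and let $w_L$ be the order of the group $\mu(L)$ of roots of unity in $L$. Fix a prime $p\mid w_L$ and let $S_p$ be the set of subgroups $H\le G$ with $p\nmid|H|$. For $H\le G$ let $\nu(H,p)$ be the $p$-adic valuation of the order $w_{L^H}$ of the group of roots of unity of the fixed field $L^H$. If $(n_H)_{H\in S_p}$ are integers with $\sum_{H\in S_p}n_H\varepsilon_H=0$ in $\mathbb{Q}[G]$, then $\sum_{H\in S_p}n_H\nu(H,p)=0$.
   Context: $\varepsilon_H=\frac1{|H|}\sum_{h\in H}h$ is the norm idempotent of $H$. *)

(* Defs.v *)
From mathcomp Require Import all_boot all_order all_algebra all_fingroup all_solvable all_field.
Set Implicit Arguments. Unset Strict Implicit. Unset Printing Implicit Defensive.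
Import GRing.Theory.
Local Open Scope ring_scope.

(* Number fields are realised as subfields of an ambient field L which is a
   finite (splitting) extension of rat. *)

Definition is_root_of_unity (F : fieldType) (x : F) : Prop :=
  exists n : nat, (0 < n)%N /\ x ^+ n = 1.

Definition mu_order (K : fieldType) (L : fieldExtType K) (E : {vspace L})
    (w : nat) : Prop :=
  exists s : seq L, [/\ uniq s,
    (forall x : L, x \in s <-> (x \in E /\ is_root_of_unity x)) &
    size s = w].

(* The norm idempotent eps_H = 1/|H| sum_{h in H} h of the group algebra
   Q[G], an element of Q[G] being represented by its coefficient function
   gT -> rat (supported in G). *)
Definition norm_idem (gT : finGroupType) (H : {set gT}) : {ffun gT -> rat} :=
  [ffun g => (g \in H)%:R / (#|H|)%:R].

(* Main.v *)
Require Import Defs.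
From mathcomp Require Import all_boot all_order all_algebra all_fingroup all_solvable all_field.
Set Implicit Arguments. Unset Strict Implicit. Unset Printing Implicit Defensive.
Import GRing.Theory Num.Theory.
Local Open Scope ring_scope.

Lemma dvdz_step (p q : nat) (y : int) :
  (q %| y - 1)%Z -> (p %| q)%N -> (q * p %| y ^+ p - 1)%Z.
Proof.
move=> hq hpq.
have := subrXX y 1 p; rewrite expr1n => ->.
rewrite PoszM; apply: dvdz_mul => //.
have hp1 : (p %| y - 1)%Z by apply: dvdz_trans hq; rewrite dvdzE /=.
have -> : \sum_(i < p) y ^+ (p.-1 - i) * 1 ^+ i =
          \sum_(i < p) (y ^+ (p.-1 - i) - 1) + p%:Z.
  transitivity (\sum_(i < p) ((y ^+ (p.-1 - i) - 1) + 1)).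
    by apply: eq_bigr => i _; rewrite expr1n mulr1 subrK.
  by rewrite big_split /= sumr_const card_ord natz.
apply: rpredD; last exact: dvdzz.
apply: rpred_sum => i _.
apply: dvdz_trans hp1 _.
have := subrXX y 1 (p.-1 - i); rewrite expr1n => ->.
exact: dvdz_mulr.
Qed.

Lemma natmodz (m n d : nat) : (m = n %[mod d])%N <-> ((d:int) %| m%:Z - n%:Z)%Z.
Proof.
rewrite -eqz_mod_dvd !modz_nat; split => [->//|/eqP[]//].
Qed.

Lemma PoszX (m n : nat) : Posz (m ^ n)%N = (Posz m) ^+ n.
Proof. by elim: n => // n IH; rewrite expnS PoszM IH exprS. Qed.

Lemma pow_cong (p b x : nat) : prime p -> (x = 1 %[mod p])%N ->
  (x ^ (p ^ b) = 1 %[mod p ^ b.+1])%N.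
Proof.
move=> pp /natmodz hx; apply/natmodz.
elim: b => [|b IH]; first by rewrite expn0 expn1.
rewrite expnS mulnC expnM PoszX.
rewrite [X in (Posz X %| _)%Z]expnS mulnC.
apply: dvdz_step => //; exact: dvdn_exp.
Qed.
Lemma root_unity_mul (F : fieldType) (x y : F) :
  is_root_of_unity x -> is_root_of_unity y -> is_root_of_unity (x * y).
Proof.
case=> n [n0 hn] [m [m0 hm]]; exists (n * m)%N; split; first by rewrite muln_gt0 n0.
by rewrite exprMn exprM hn expr1n mulnC exprM hm expr1n mulr1.
Qed.

Lemma root_unity_neq0 (F : fieldType) (x : F) : is_root_of_unity x -> x != 0.
Proof.
case=> n [n0 hn]; apply/eqP => x0; move: hn; rewrite x0 expr0n.
by case: n n0 => // n _ /eqP; rewrite eq_sym oner_eq0.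
Qed.

Lemma mu_facts (F0 : fieldType) (L0 : fieldExtType F0) (V : {subfield L0}) w :
  mu_order V w -> [/\ (0 < w)%N, exists2 z, z \in V & w.-primitive_root z
     & forall z d, z \in V -> (0 < d)%N -> d.-primitive_root z -> (d %| w)%N].
Proof.
case=> s [Us Hs Sz].
have root_s x : x \in s -> x ^+ w = 1.
  move=> xs; have [xV xr] := (Hs x).1 xs.
  have xnz := root_unity_neq0 xr.
  pose s' := map (fun y => x * y) s.
  have Us' : uniq s' by rewrite map_inj_uniq // ; exact: mulfI.
  have ss' : {subset s' <= s}.
    move=> _ /mapP[y ys ->]; have [yV yr] := (Hs y).1 ys.
    apply/(Hs _).2; split; first exact: memvM.
    exact: root_unity_mul.
  have hsz : (size s <= size s')%N by rewrite size_map.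
  have [_ eqs] := uniq_min_size Us' ss' hsz.
  have pe : perm_eq s' s by apply: uniq_perm.
  have P0 : \prod_(y <- s) y != 0.
    rewrite prodf_seq_neq0; apply/allP => y ys /=.
    exact: root_unity_neq0 ((Hs y).1 ys).2.
  apply: (mulIf P0); rewrite mul1r.
  rewrite -{2}(perm_big _ pe) big_map big_split /= big_const_seq count_predT Sz.
  congr (_ * _).
  by elim: (w) => [|k IH] //=; rewrite exprS IH.
have s1 : 1 \in s by apply/(Hs 1).2; split; [exact: mem1v | exists 1%N; rewrite expr1n].
have w0 : (0 < w)%N by rewrite -Sz; case: (s) s1.
split=> //.
  have : has w.-primitive_root s.
    apply: has_prim_root => //; last by rewrite Sz.
    by apply/allP => x xs; rewrite unity_rootE root_s.
  by case/hasP => z zs pz; exists z => //; exact: ((Hs z).1 zs).1.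
move=> z d zV d0 pz.
have zs : z \in s by apply/(Hs z).2; split => //; exists d; rewrite prim_expr_order.
by rewrite (prim_order_dvd pz) root_s.
Qed.
Section Fp.
Variables (p : nat) (pp : prime p).

Lemma Fp_lt (x : 'F_p) : (val x < p)%N.
Proof. apply: leq_trans (ltn_ord x) _; by rewrite Fp_cast. Qed.

Lemma Fp_valM (x y : 'F_p) : val (x * y) = (val x * val y %% p)%N.
Proof.
rewrite -[in LHS](natr_Zp x) -[in LHS](natr_Zp y) -natrM; exact: val_Fp_nat.
Qed.

Lemma Fp_val1 : val (1 : 'F_p) = 1%N.
Proof. by rewrite -(modn_small (prime_gt1 pp)); exact: (val_Fp_nat pp 1). Qed.

Lemma Fp_fermat (x : 'F_p) : x != 0 -> x ^+ p.-1 = 1.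
Proof.
move=> xnz; apply: (mulIf xnz); rewrite mul1r -exprSr prednK ?prime_gt0 //.
by have := expf_card x; rewrite card_Fp.
Qed.

Lemma Fp_prim : exists R : 'F_p, (p.-1).-primitive_root R.
Proof.
pose rs := enum [pred x : 'F_p | x != 0].
have : has (p.-1).-primitive_root rs.
  apply: has_prim_root.
  - by rewrite -subn1 subn_gt0 prime_gt1.
  - by apply/allP => x; rewrite mem_enum inE => xnz; rewrite unity_rootE Fp_fermat.
  - exact: enum_uniq.
  - rewrite -cardE; have := cardC1 (0 : 'F_p); rewrite card_Fp // => <-.
    by apply: subset_leq_card; apply/subsetP => x; rewrite !inE.
by case/hasP => R _ hR; exists R.
Qed.
End Fp.

Section Char.
Variables (L : splittingFieldType rat) (E : {subfield L}).
Variables (p : nat) (pp : prime p) (zeta : L).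
Hypotheses (zE : zeta \in E) (pz : p.-primitive_root zeta).

Lemma zeta_inj (x y : 'F_p) : zeta ^+ val x = zeta ^+ val y -> x = y.
Proof.
move/eqP; rewrite (eq_prim_root_expr pz) !modn_small ?Fp_lt // => /eqP h.
exact: val_inj.
Qed.

Lemma gal_zeta_exists (g : gal_of E) (R : 'F_p) :
  (p.-1).-primitive_root R ->
  exists j : 'I_(p.-1), g zeta = zeta ^+ val (R ^+ j).
Proof.
move=> pR.
have hg : (g zeta) ^+ p = 1 by rewrite -rmorphXn prim_expr_order // rmorph1.
have [i hi] := prim_rootP pz hg.
pose x : 'F_p := (val i)%:R.
have vx : nat_of_ord x = nat_of_ord i by rewrite /x val_Fp_nat // modn_small ?ltn_ord.
have xnz : x != 0.
  apply/eqP => x0.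
  have vi : nat_of_ord i = 0%N by rewrite -vx x0.
  have : g zeta = 1 by rewrite hi vi expr0.
  rewrite -(rmorph1 (g : 'AEnd(L))) => /(fmorph_inj (g : 'AEnd(L))) /eqP.
  rewrite -{1}(expr1 zeta) -(expr0 zeta) (eq_prim_root_expr pz).
  by rewrite !modn_small ?prime_gt1 ?prime_gt0.
have [j hj] := prim_rootP pR (Fp_fermat pp xnz).
by exists j; rewrite -hj; change (g zeta = zeta ^+ nat_of_ord x); rewrite vx.
Qed.

Lemma char_exists : exists lam : gal_of E -> algC,
  (forall g h, lam (g * h)%g = lam g * lam h) /\
  (forall g, (lam g == 1) = (g zeta == zeta)).
Proof.
have [R pR] := Fp_prim pp.
have p1 : (0 < p.-1)%N by rewrite -subn1 subn_gt0 prime_gt1.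
have [z pzC] := C_prim_root_exists p1.
pose J (g : gal_of E) : nat :=
  if [pick j : 'I_(p.-1) | g zeta == zeta ^+ val (R ^+ j)] is Some j then val j else 0%N.
have JP (g : gal_of E) : g zeta = zeta ^+ val (R ^+ J g).
  rewrite /J; case: pickP => [j /eqP //| none].
  have [j hj] := gal_zeta_exists g pR.
  by move: (none j); rewrite hj eqxx.
have JM (g h : gal_of E) : R ^+ J (g * h)%g = R ^+ (J g + J h).
  apply: zeta_inj; rewrite -JP galM // (JP g) rmorphXn /= (JP h) -exprM.
  by rewrite exprD mulrC (Fp_valM pp) (prim_expr_mod pz).
exists (fun g => z ^+ J g); split.
  move=> g h; rewrite -exprD; apply/eqP.
  by rewrite (eq_prim_root_expr pzC) -(eq_prim_root_expr pR) JM.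
move=> g; rewrite -(expr0 z) (eq_prim_root_expr pzC) -(eq_prim_root_expr pR) expr0.
apply/eqP/eqP => [h1|hz].
  by rewrite JP h1 Fp_val1 // expr1.
by apply: zeta_inj; rewrite -JP Fp_val1 // expr1.
Qed.
End Char.

Lemma ffunMzE' (T : finType) (f : {ffun T -> rat}) (n : int) x : (f *~ n) x = f x *~ n.
Proof. rewrite /intmul; case: n => k; [by rewrite ffunMnE | by rewrite ffunE ffunMnE]. Qed.

Lemma memvX' (L : splittingFieldType rat) (V : {subfield L}) (x : L) k :
  x \in V -> x ^+ k \in V.
Proof. by move=> xV; elim: k => [|k IH]; rewrite ?expr0 ?mem1v // exprS memvM. Qed.

Lemma fix_pow (L : splittingFieldType rat) (E : {subfield L}) (y : gal_of E) x k :
  x \in E -> y x = x -> (y ^+ k)%g x = x.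
Proof.
move=> xE yx; elim: k => [|k IH]; first by rewrite expg0 gal_id.
by rewrite expgSr galM // IH.
Qed.

Lemma Esub1 (L : splittingFieldType rat) (E : {subfield L}) x :
  x \in E -> x \in fixedField (1%G : {group gal_of E}).
Proof. by move=> xE; apply/fixedFieldP => // y; rewrite inE => /eqP ->; exact: gal_id. Qed.

Unset Implicit Arguments.

Theorem proposition3p7
  (L : splittingFieldType rat) (K E : {subfield L})
  (galEK : galois K E)
  (w : {group gal_of E} -> nat)
  (hw : forall H : {group gal_of E}, H \subset 'Gal(E / K)%g ->
          mu_order (fixedField H) (w H))
  (p : nat) (pp : prime p) (pw : (p %| w 1%G)%N)
  (n : {group gal_of E} -> int)
  (hn : \sum_(H : {group gal_of E} | (H \subset 'Gal(E / K)%g) && ~~ (p %| #|H|)%N)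
          norm_idem H *~ n H = 0) :
  \sum_(H : {group gal_of E} | (H \subset 'Gal(E / K)%g) && ~~ (p %| #|H|)%N)
     n H * (logn p (w H))%:Z = 0.
Proof.
set G := 'Gal(E / K)%g.
have [w1p [z1 z1V pz1] dv1] :=
  @mu_facts _ _ (fixedField_aspace (1%G : {group gal_of E})) _ (hw 1%G (sub1G _)).
have z1E : z1 \in E := (mem_fixedFieldP z1V).1.
set a := logn p (w 1%G).
have a0 : (0 < a)%N by rewrite logn_gt0 mem_primes pp w1p pw.
set d := (p ^ a.-1)%N.
set q := (p ^ a)%N.
have qd : q = (d * p)%N by rewrite /q /d -expnSr prednK.
have d0 : (0 < d)%N by rewrite expn_gt0 prime_gt0.
have q0 : (0 < q)%N by rewrite expn_gt0 prime_gt0.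
have pzq : q.-primitive_root (z1 ^+ (w 1%G %/ q)) by apply: dvdn_prim_root => //; exact: pfactor_dvdnn.
set zq := z1 ^+ (w 1%G %/ q) in pzq.
have zqE : zq \in E by apply: memvX'.
have pzeta : p.-primitive_root (zq ^+ d).
  have := dvdn_prim_root pzq (_ : (p %| q)%N); rewrite qd mulnK ?prime_gt0 //.
  by apply; rewrite dvdn_mull.
set zeta := zq ^+ d in pzeta.
have zE : zeta \in E by apply: memvX'.
have [lam [lamM lam1]] := char_exists pp zE pzeta.
have nu : forall H : {group gal_of E}, H \subset G -> ~~ (p %| #|H|)%N ->
    logn p (w H) = ((zeta \in fixedField H) * a)%N.
  move=> H sHG npH.
  have [wHp [zH zHV pzH] dvH] := @mu_facts _ _ (fixedField_aspace H) _ (hw H sHG).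
  have zHE : zH \in E := (mem_fixedFieldP zHV).1.
  have dvw : (w H %| w 1%G)%N by apply: dv1 (Esub1 zHE) wHp pzH.
  have le1 : (logn p (w H) <= a)%N by apply: dvdn_leq_log.
  case bH : (zeta \in fixedField H); last first.
    rewrite mul0n lognE; case: (boolP (p %| w H)%N) => [pwH|]; last by rewrite !andbF.
    exfalso; move/negbT: bH => /negP; apply.
    have py := dvdn_prim_root pzH pwH.
    have yV : zH ^+ (w H %/ p) \in fixedField_aspace H by apply: memvX'.
    have [k ->] := prim_rootP py (prim_expr_order pzeta).
    exact: (@memvX' _ (fixedField_aspace H)).
  rewrite mul1n; apply/eqP; rewrite eqn_leq le1 /= -(pfactor_dvdn _ pp wHp).
  apply: (dvH zq) => //.
  apply/fixedFieldP => // h hH.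
  have hq : (h zq) ^+ q = 1 by rewrite -rmorphXn prim_expr_order // rmorph1.
  have [[i _] /= hi] := prim_rootP pzq hq.
  have hz : h zeta = zeta := (mem_fixedFieldP bH).2 h hH.
  have i1 : (i = 1 %[mod p])%N.
    move: hz; rewrite /zeta rmorphXn /= hi -exprM => /eqP.
    rewrite -{2}(expr1 zq) -exprM (eq_prim_root_expr pzq) qd.
    rewrite [(d * p)%N]mulnC -!muln_modl // => /eqP.
    by move/eqP; rewrite eqn_pmul2r // => /eqP.
  have ipow : (i ^ d = 1 %[mod q])%N.
    by rewrite /q -(prednK a0); apply: pow_cong.
  have hpow j : (h ^+ j)%g zq = zq ^+ (i ^ j).
    elim: j => [|j IH]; first by rewrite expg0 gal_id expn0 expr1.
    by rewrite expgSr galM // IH rmorphXn /= hi -exprM expnS.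
  have hd : (h ^+ d)%g zq = zq.
    by rewrite hpow; apply/eqP; rewrite -{2}(expr1 zq) (eq_prim_root_expr pzq) ipow.
  have gen : generator <[h]>%g (h ^+ d)%g.
    rewrite generator_coprime coprime_sym.
    apply: coprimeXl; apply: coprime_dvdr (order_dvdG hH) _.
    by rewrite prime_coprime.
  have : h \in <[(h ^+ d)%g]>%g by rewrite -(eqP gen) cycle_id.
  case/cycleP => k ->; exact: fix_pow.
have Phi : forall H : {group gal_of E}, H \subset G ->
    \sum_(g in G) ratr (norm_idem H g) * lam g = ((zeta \in fixedField H) : nat)%:R.
  move=> H sHG.
  have -> : \sum_(g in G) ratr (norm_idem H g) * lam g =
            (#|H|%:R)^-1 * \sum_(g in H) lam g.
    rewrite mulr_sumr (big_setID H) /= (setIidPr sHG) [X in _ + X]big1 ?addr0.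
      by apply: eq_bigr => g gH; rewrite ffunE gH fmorph_div !rmorph_nat mulr1n div1r.
    move=> g; rewrite inE => /andP[/negbTE gnH _].
    by rewrite ffunE gnH mulr0n mul0r rmorph0 mul0r.
  case bH : (zeta \in fixedField H).
    rewrite (eq_bigr (fun _ => 1)); last first.
      by move=> h hH; apply/eqP; rewrite lam1 (mem_fixedFieldP bH).2.
    by rewrite sumr_const mulr1n mulVf // pnatr_eq0 -lt0n cardG_gt0.
  have [h0 h0H h0z] : exists2 h0, h0 \in H & h0 zeta != zeta.
    apply/forall_inPn; apply: contra (negbT bH) => /forall_inP hf.
    by apply/fixedFieldP => // x xH; apply/eqP/hf.
  set Sm := \sum_(g in H) lam g.
  have eS : Sm = lam h0 * Sm.
    rewrite /Sm mulr_sumr (reindex_inj (mulgI h0)) /=.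
    by apply: eq_big => [g|g _]; [rewrite groupMl | rewrite lamM].
  have : (1 - lam h0) * Sm = 0 by rewrite mulrBl mul1r -eS subrr.
  move/eqP; rewrite mulf_eq0 subr_eq0 eq_sym lam1 (negbTE h0z) /= => /eqP ->.
  by rewrite mulr0.
pose S (H : {group gal_of E}) := (H \subset G) && ~~ (p %| #|H|)%N.
have rel : \sum_(H | S H && (zeta \in fixedField H)) n H = 0.
  have := congr1 (fun f : {ffun gal_of E -> rat} => \sum_(g in G) ratr (f g) * lam g) hn.
  rewrite /= [RHS]big1; last by move=> g _; rewrite ffunE rmorph0 mul0r.
  under eq_bigr => g _ do rewrite sum_ffunE rmorph_sum mulr_suml.
  rewrite exchange_big /=.
  under eq_bigr => H _ do
    (under eq_bigr => g _ do rewrite ffunMzE' rmorphMz -mulrzl -mulrA; rewrite -mulr_sumr).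
  rewrite (eq_bigr (fun H : {group gal_of E} => if zeta \in fixedField H then (n H)%:~R else 0)); last first.
    move=> H /andP[sHG _]; rewrite Phi //.
    by case: (zeta \in fixedField H); rewrite ?mulr1n ?mulr1 ?mulr0n ?mulr0.
  rewrite -big_mkcondr /= => /eqP.
  have -> : \sum_(H | S H && (zeta \in fixedField H)) ((n H)%:~R : algC) =
            (\sum_(H | S H && (zeta \in fixedField H)) n H)%:~R.
    by elim/big_rec2: _ => [|H x y _ ->]; rewrite ?intrD.
  by rewrite intr_eq0 => /eqP.
rewrite (eq_bigr (fun H : {group gal_of E} => if zeta \in fixedField H then n H * a%:Z else 0)); last first.
  move=> H /andP[sHG npH]; rewrite nu //.
  by case: (zeta \in fixedField H); rewrite ?mul1n ?mul0n ?mulr0.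
by rewrite -big_mkcondr /= -mulr_suml rel mul0r.
Qed.
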